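(* Let $a$ be a positive integer with $\sigma(a)\neq 2a$, and let $b,c$ be coprime integers with $c>0$ and $\dfrac{b}{c}=\dfrac{a}{2a-\sigma(a)}$. Let $f$ be a positive integer coprime to $a$, and let $g,h$ be positive integers with $gh=\sigma(f)$. Put $e=bf-bgh+cgh$ and assume $e\neq 0$. Let $x,y$ be positive integers such that $p=hx-1$, $q=gy-1$, $r=xy-1$ are primes, $p\neq q$, none of $p,q,r$ divides $a$, and $\gcd(f,r)=1$. If $$(ex-bg)(ey-bh)=b^2gh+be(f-1),$$ then $apq$ and $afr$ are amicable numbers.
   Context: For a positive integer $N$, $\sigma(N)$ denotes the sum of all positive divisors of $N$. Positive integers $M,N$ are amicable if $\sigma(M)-M=N$ and $\sigma(N)-N=M$. *)

(* Defs.v *)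
From mathcomp Require Export all_boot all_order all_algebra.
Set Implicit Arguments. Unset Strict Implicit. Unset Printing Implicit Defensive.

Definition sigma (N : nat) : nat := \sum_(d <- divisors N) d.

(* Positive integers M, N are amicable if sigma(M) - M = N and sigma(N) - N = M.
   (Subtraction in nat is exact here since sigma N >= N for N > 0.) *)
Definition amicable (M N : nat) : Prop :=
  [/\ 0 < M, 0 < N, sigma M - M = N & sigma N - N = M]%N.

(* Main.v *)
Require Import Defs.
From mathcomp Require Import ring.
Import Order.TTheory GRing.Theory Num.Theory.
Lemma sigma_mul m n : 0 < m -> 0 < n -> coprime m n ->
  sigma (m * n) = sigma m * sigma n.
Proof.
move=> m0 n0 cmn.
rewrite /sigma big_distrlr /=.
rewrite -(big_allpairs_dep (h := fun i j => i * j) (F := id)).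
apply: perm_big; apply: uniq_perm.
- exact: divisors_uniq.
- apply: allpairs_uniq; [exact: divisors_uniq | exact: divisors_uniq |].
  move=> [i j] [i' j'] /allpairsP[[i1 j1] [/= Hi Hj [-> ->]]]
    /allpairsP[[i2 j2] [/= Hi2 Hj2 [-> ->]]] /= E.
  rewrite -!dvdn_divisors // in Hi Hj Hi2 Hj2.
  have key : forall u v, u %| m -> v %| n -> gcdn m (u * v) = u /\ gcdn n (u * v) = v.
    move=> u v um vn; split.
      rewrite Gauss_gcdl; first exact/gcdn_idPr.
      exact: coprime_dvdr vn cmn.
    rewrite mulnC Gauss_gcdl; first exact/gcdn_idPr.
    by apply: coprime_dvdr um _; rewrite coprime_sym.
  have [k1 k2] := key _ _ Hi Hj; have [k3 k4] := key _ _ Hi2 Hj2.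
  by congr pair; [rewrite -k1 -k3 E | rewrite -k2 -k4 E].
- move=> d; rewrite -dvdn_divisors ?muln_gt0 ?m0 //.
  apply/idP/idP.
  + move=> dmn; apply/allpairsP; exists (gcdn d m, gcdn d n); split => /=.
    * by rewrite -dvdn_divisors // dvdn_gcdr.
    * by rewrite -dvdn_divisors // dvdn_gcdr.
    apply/eqP; rewrite eqn_dvd; apply/andP; split.
      rewrite muln_gcdl dvdn_gcd dvdn_mulr //= muln_gcdr dvdn_gcd dvdn_mull //.
    rewrite Gauss_dvd ?dvdn_gcdl //.
    exact: coprime_dvdl (dvdn_gcdr _ _) (coprime_dvdr (dvdn_gcdr _ _) cmn).
  + move=> /allpairsP [[i j] [/= Hi Hj ->]].
    rewrite -!dvdn_divisors // in Hi Hj.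
    exact: dvdn_mul.
Qed.

Lemma sigma_prime p : prime p -> sigma p = p + 1.
Proof.
move=> pp.
have p1 : 1 < p by exact: prime_gt1.
rewrite /sigma (perm_big [:: 1; p]) ?big_cons ?big_nil /=; first by rewrite addn0 addnC.
apply: uniq_perm; first exact: divisors_uniq.
  by rewrite /= inE andbT; apply/eqP => E; rewrite -E in p1.
move=> d; rewrite -dvdn_divisors ?prime_gt0 // !inE.
case/primeP: pp => _ H; apply/idP/idP; first exact: H.
by case/orP => /eqP ->; rewrite ?dvd1n.
Qed.
Local Open Scope ring_scope.
Lemma ratstep (a s : nat) (b c : int) : s <> (2*a)%N -> 0 < c ->
  (b%:~R / c%:~R : rat) = (a%:R / ((2 * a)%:R - s%:R) : rat) ->
  b * ((2*a)%:Z - s%:Z) = c * a%:Z.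
Proof.
move=> hs hc H.
have hc' : (c%:~R : rat) != 0 by rewrite intr_eq0 gt_eqF.
have hD : ((2 * a)%:R - s%:R : rat) != 0.
  rewrite subr_eq0 eqr_nat; apply/eqP=> E; exact: hs (esym E).
move/eqP: H; rewrite eqr_div // => /eqP H.
apply/eqP; rewrite -subr_eq0 -(intr_eq0 rat) rmorphB !rmorphM rmorphB /=.
rewrite -!/(_%:R) H /= mulrC subrr //.
Qed.
Lemma intstep (a s f : nat) (b c e H G X Y : int) : c != 0 -> e != 0 ->
  b * ((2*a)%:Z - s%:Z) = c * a%:Z ->
  e = b * f%:Z - b * G * H + c * G * H ->
  (e * X - b * G) * (e * Y - b * H) = b ^+ 2 * G * H + b * e * (f%:Z - 1) ->
  s%:Z * (H * X) * (G * Y) = a%:Z * (H * X - 1) * (G * Y - 1) + a%:Z * f%:Z * (X * Y - 1).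
Proof.
move=> c0 e0 HD ed Heq.
rewrite PoszM in HD.
have t2 : (2%N : int) = 2 by [].
rewrite t2 in HD.
set D := 2 * a%:Z - s%:Z in HD.
have E0 : e * X * Y - b * H * X - b * G * Y - b * (f%:Z - 1) = 0.
  have : e * (e * X * Y - b * H * X - b * G * Y - b * (f%:Z - 1)) = 0.
    rewrite -[RHS](subrr ((e * X - b * G) * (e * Y - b * H))) {2}Heq; ring.
  by move/eqP; rewrite mulf_eq0 (negbTE e0) /= => /eqP.
apply: (mulfI c0); apply/eqP; rewrite -subr_eq0; apply/eqP.
rewrite (_ : _ - _ = (b * D - c * a%:Z) * ((H * X - 1) * (G * Y - 1) + f%:Z * (X * Y - 1) - 2 * (H*X*G*Y)) - D * (e * X * Y - b * H * X - b * G * Y - b * (f%:Z - 1))).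
  by rewrite HD E0 subrr mul0r mulr0 subrr.
rewrite /D ed; ring.
Qed.

Theorem mainTheorem9 (a : nat) (b c : int) (f g h x y : nat) :
  (0 < a)%N ->
  sigma a <> (2 * a)%N ->
  coprimez b c -> 0 < c ->
  (b%:~R / c%:~R : rat) = (a%:R / ((2 * a)%:R - (sigma a)%:R) : rat) ->
  (0 < f)%N -> coprime f a ->
  (0 < g)%N -> (0 < h)%N -> (g * h)%N = sigma f ->
  let e : int := b * f%:Z - b * g%:Z * h%:Z + c * g%:Z * h%:Z in
  e != 0 ->
  (0 < x)%N -> (0 < y)%N ->
  let p := (h * x - 1)%N in
  let q := (g * y - 1)%N in
  let r := (x * y - 1)%N in
  prime p -> prime q -> prime r -> p <> q ->
  ~~ (p %| a)%N -> ~~ (q %| a)%N -> ~~ (r %| a)%N ->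
  coprime f r ->
  (e * x%:Z - b * g%:Z) * (e * y%:Z - b * h%:Z)
    = b ^+ 2 * g%:Z * h%:Z + b * e * (f%:Z - 1) ->
  amicable (a * p * q)%N (a * f * r)%N.
Proof.
move=> a0 hs _ c0 Hrat f0 cfa g0 h0 ghf e e0 x0 y0 p q r pp qp rp pq pa qa ra cfr Heq.
have HD := @ratstep a (sigma a) b c hs c0 Hrat.
have c0' : c != 0 by rewrite gt_eqF.
have hp : (h * x = p + 1)%N.
  by move: (prime_gt0 pp); rewrite /p; case: (h * x)%N => [|k] //= _; rewrite subn1 addn1.
have hq : (g * y = q + 1)%N.
  by move: (prime_gt0 qp); rewrite /q; case: (g * y)%N => [|k] //= _; rewrite subn1 addn1.
have hr : (x * y = r + 1)%N.
  by move: (prime_gt0 rp); rewrite /r; case: (x * y)%N => [|k] //= _; rewrite subn1 addn1.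
have cpa : coprime p a by rewrite prime_coprime.
have cqa : coprime q a by rewrite prime_coprime.
have cra : coprime r a by rewrite prime_coprime.
have cpq : coprime p q by rewrite prime_coprime // dvdn_prime2 //; apply/eqP.
have p0 := prime_gt0 pp; have q0 := prime_gt0 qp; have r0 := prime_gt0 rp.
have cap : coprime a p by rewrite coprime_sym.
have caf : coprime a f by rewrite coprime_sym.
have capq : coprime (a * p) q by rewrite coprimeMl cpq andbT coprime_sym.
have cafr : coprime (a * f) r by rewrite coprimeMl cfr andbT coprime_sym.
have ap0 : (0 < a * p)%N by rewrite muln_gt0 a0 p0.
have af0 : (0 < a * f)%N by rewrite muln_gt0 a0 f0.
have S1 : sigma (a * p * q) = (sigma a * (p + 1) * (q + 1))%N.
  by rewrite (@sigma_mul (a * p)%N q ap0 q0 capq) (@sigma_mul a p a0 p0 cap) (@sigma_prime p pp) (@sigma_prime q qp).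
have S2 : sigma (a * f * r) = (sigma a * (p + 1) * (q + 1))%N.
  rewrite (@sigma_mul (a * f)%N r af0 r0 cafr) (@sigma_mul a f a0 f0 caf) (@sigma_prime r rp).
  by rewrite -ghf -hr -hp -hq; ring.
have key : (sigma a * (p + 1) * (q + 1) = a * p * q + a * f * r)%N.
  have := @intstep a (sigma a) f b c e h%:Z g%:Z x%:Z y%:Z c0' e0 HD erefl Heq.
  have hpZ : h%:Z * x%:Z = p%:Z + 1 by rewrite -PoszM hp PoszD.
  have hqZ : g%:Z * y%:Z = q%:Z + 1 by rewrite -PoszM hq PoszD.
  have hrZ : x%:Z * y%:Z = r%:Z + 1 by rewrite -PoszM hr PoszD.
  rewrite hpZ hqZ hrZ !addrK => E.
  by apply/eqP; rewrite -eqz_nat !PoszD !PoszM E.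
have M0 : (0 < a * p * q)%N by rewrite !muln_gt0 a0 p0 q0.
have N0 : (0 < a * f * r)%N by rewrite !muln_gt0 a0 f0 r0.
split => //.
- by rewrite S1 key addKn.
- by rewrite S2 key addnC addKn.
Qed.
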